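(* Let $a=b=p$ and $0\le c<p$, and let $r\ge p/2$. Then the optimal DMT of the half-duplex $(a,b,c)$-relay channel, even when the relay has global CSI, is at most $(p+c-2r)^+$, which equals the DMT $d_{QMF}(r)$ achieved by static QMF with equal listening and transmitting times. Consequently static QMF is DMT optimal for $r\ge p/2$ (under global CSI, and hence also under CSIR only).
   Context: The $(a,b,c)$-relay channel: source $S$, half-duplex relay $R$, destination $D$; source signal broadcast to $R$ and $D$, superposition at $D$; i.i.d. $\mathcal{CN}(0,1)$ quasi-static gains; average SNRs $\rho^a,\rho^b,\rho^c$ on S-R, R-D, S-D. Exponential orders $\alpha,\beta,\gamma$ of $|h_{sr}|^2\rho^a,|h_{rd}|^2\rho^b,|h_{sd}|^2\rho^c$ (e.g. $\alpha=\lim_{\rho\to\infty}\log(1+|h_{sr}|^2\rho^a)/\log\rho$). Let $r_{h.d.}(t)=\min\{t\max(\alpha,\gamma)+(1-t)\gamma,\ t\gamma+(1-t)\max(\beta,\gamma)\}$. The global-CSI DMT satisfies $d_{G\text{-}CSI}(r)\le\inf\{a+b+c-\alpha-\beta-\gamma:\max_{t\in[0,1]}r_{h.d.}(t)\le r,\ \alpha\in[0,a],\beta\in[0,b],\gamma\in[0,c]\}$. Static QMF: the relay listens for half the block, quantizes at noise level, maps to a random codeword and transmits in the other half; its DMT is $d_{QMF}(r)=\min\{a+b+c-\alpha-\beta-\gamma: r_{h.d.}(1/2)\le r,\ \alpha\in[0,a],\beta\in[0,b],\gamma\in[0,c]\}$, which for $c\le\min(a,b)$ equals $(\min(a,b)+c-2r)^+$.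 $x^+=\max(x,0)$. *)

(* Defs.v *)
From Stdlib Require Import Reals Lra.
Open Scope R_scope.

Definition pos_part (x : R) : R := Rmax x 0.

(* r_{h.d.}(t) for exponential orders alpha, beta, gamma *)
Definition r_hd (al be ga t : R) : R :=
  Rmin (t * Rmax al ga + (1 - t) * ga) (t * ga + (1 - t) * Rmax be ga).

(* Feasible triples for the global-CSI outage bound:
   max_{t in [0,1]} r_hd(t) <= r, alpha in [0,a], beta in [0,b], gamma in [0,c].
   (max_t f(t) <= r is written out as: forall t in [0,1], f t <= r.) *)
Definition gcsi_feasible (a b c r al be ga : R) : Prop :=
  (forall t, 0 <= t <= 1 -> r_hd al be ga t <= r) /\
  0 <= al <= a /\ 0 <= be <= b /\ 0 <= ga <= c.

Definition qmf_feasible (a b c r al be ga : R) : Prop :=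
  r_hd al be ga (1/2) <= r /\
  0 <= al <= a /\ 0 <= be <= b /\ 0 <= ga <= c.

Definition value_set (feas : R -> R -> R -> Prop) (a b c : R) (v : R) : Prop :=
  exists al be ga, feas al be ga /\ v = a + b + c - al - be - ga.

(* "inf S <= x": every lower bound of S is <= x *)
Definition inf_le (S : R -> Prop) (x : R) : Prop :=
  forall m, (forall v, S v -> m <= v) -> m <= x.

Definition is_min (S : R -> Prop) (x : R) : Prop :=
  S x /\ forall v, S v -> x <= v.

(* The global-CSI DMT upper bound: inf { a+b+c-al-be-ga : feasible } *)
Definition gcsi_bound_set (a b c r : R) : R -> Prop :=
  value_set (gcsi_feasible a b c r) a b c.

(* d_QMF(r) = min { a+b+c-al-be-ga : qmf feasible } *)
Definition qmf_set (a b c r : R) : R -> Prop :=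
  value_set (qmf_feasible a b c r) a b c.

(* Main.v *)
Require Import Defs.
From Stdlib Require Import Reals Lra.
Open Scope R_scope.

Lemma rhd_bound (x g r t : R) : g <= x -> x + g <= 2 * r -> r_hd x x g t <= r.
Proof.
  intros Hg Hs. unfold r_hd. rewrite Rmax_left by lra.
  set (A := t * x + (1 - t) * g). set (B := t * g + (1 - t) * x).
  assert (A + B = x + g) by (unfold A, B; ring).
  pose proof (Rmin_l A B). pose proof (Rmin_r A B). lra.
Qed.

Lemma witness (p c r : R) (hc0 : 0 <= c) (hcp : c < p) (hr : p / 2 <= r) :
  exists g, gcsi_feasible p p c r p p g /\ qmf_feasible p p c r p p g /\
    pos_part (p + c - 2 * r) = p + p + c - p - p - g.
Proof.
  unfold pos_part. destruct (Rle_dec 0 (p + c - 2 * r)).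
  - exists (2 * r - p). rewrite Rmax_left by lra.
    split; [|split]; [split|split|lra]; try (intros; apply rhd_bound; lra);
    try apply rhd_bound; lra.
  - exists c. rewrite Rmax_right by lra.
    split; [|split]; [split|split|lra]; try (intros; apply rhd_bound; lra);
    try apply rhd_bound; lra.
Qed.

Theorem lemma5 (p c r : R) (hc0 : 0 <= c) (hcp : c < p) (hr : p / 2 <= r) :
  (* the global-CSI upper bound  inf{...}  is at most (p+c-2r)^+ *)
  inf_le (gcsi_bound_set p p c r) (pos_part (p + c - 2 * r)) /\
  (* hence any d_{G-CSI}(r) below that infimum is at most (p+c-2r)^+ *)
  (forall dG : R, (forall v, gcsi_bound_set p p c r v -> dG <= v) ->
     dG <= pos_part (p + c - 2 * r)) /\
  (* and (p+c-2r)^+ is exactly d_QMF(r) *)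
  is_min (qmf_set p p c r) (pos_part (p + c - 2 * r)).
Proof.
  destruct (witness p c r hc0 hcp hr) as [g [Hg [Hq He]]].
  assert (Hin : gcsi_bound_set p p c r (pos_part (p + c - 2 * r))).
  { exists p, p, g. auto. }
  split; [|split].
  - intros m Hm. apply Hm, Hin.
  - intros dG Hm. apply Hm, Hin.
  - split. { exists p, p, g. auto. }
    intros v [al [be [ga [[H1 [H2 [H3 H4]]] ->]]]].
    unfold r_hd, pos_part in *.
    pose proof (Rmin_l (1 / 2 * Rmax al ga + (1 - 1 / 2) * ga)
                       (1 / 2 * ga + (1 - 1 / 2) * Rmax be ga)).
    pose proof (Rmin_r (1 / 2 * Rmax al ga + (1 - 1 / 2) * ga)
                       (1 / 2 * ga + (1 - 1 / 2) * Rmax be ga)).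
    pose proof (Rmax_l al ga). pose proof (Rmax_l be ga).
    apply Rmax_lub; [|lra].
    destruct (Rle_dec (1 / 2 * Rmax al ga + (1 - 1 / 2) * ga)
                      (1 / 2 * ga + (1 - 1 / 2) * Rmax be ga)).
    + rewrite Rmin_left in H1 by lra. lra.
    + rewrite Rmin_right in H1 by lra. lra.
Qed.
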